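(* For every $n$-vertex graph $G$ (with $n\ge 2$), there exists a graph $G'$ with fewer than $n^2$ vertices such that $G$ is an induced subgraph of $G'$ and $G'$ has sd-degeneracy at most $1$.
   Context: For a graph $G$ and distinct vertices $u,v$, let $N_G(u)$ be the open neighborhood and $\mathrm{sd}_G(u,v) := |(N_G(u)\setminus\{v\}) \triangle (N_G(v)\setminus\{u\})|$, where $\triangle$ is symmetric difference of sets. The sd-degeneracy $\mathrm{sdd}(G)$ of a graph $G$ is the smallest non-negative integer $d$ such that either $|V(G)|=1$, or there exist distinct $u,v\in V(G)$ with $\mathrm{sd}_G(u,v)\le d$ and $\mathrm{sdd}(G-v)\le d$. Equivalently, $\mathrm{sdd}(G)\le d$ iff there is an ordering $v_1,\dots,v_n$ of $V(G)$ such that for every $i\in[n-1]$ there is $j>i$ with $\mathrm{sd}_{G_i}(v_i,v_j)\le d$, where $G_i := G-\{v_k : k<i\}$. *)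

(* Defs.v *)
From mathcomp Require Import all_boot.
Set Implicit Arguments. Unset Strict Implicit. Unset Printing Implicit Defensive.

Definition simple_graph (T : finType) (e : rel T) : Prop :=
  symmetric e /\ irreflexive e.

Definition nbhd_in (T : finType) (e : rel T) (S : {set T}) (u : T) : {set T} :=
  [set w in S | e u w].

Definition sd_in (T : finType) (e : rel T) (S : {set T}) (u v : T) : nat :=
  let A := nbhd_in e S u :\ v in
  let B := nbhd_in e S v :\ u in
  #|(A :\: B) :|: (B :\: A)|.

Inductive sdd_le (T : finType) (e : rel T) (d : nat) : {set T} -> Prop :=
| sdd_single (S : {set T}) : #|S| = 1 -> sdd_le e d S
| sdd_step (S : {set T}) (u v : T) :
    u \in S -> v \in S -> u != v ->
    sd_in e S u v <= d -> sdd_le e d (S :\ v) -> sdd_le e d S.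

(* Main.v *)
Require Import Defs.
From mathcomp Require Import all_boot zify.
Set Implicit Arguments. Unset Strict Implicit. Unset Printing Implicit Defensive.

Lemma sdd_by_key (T : finType) (e : rel T) d (r : T -> nat) (p : T -> T) :
  injective r ->
  forall S : {set T}, S != set0 ->
  (forall v, v \in S -> (exists2 w, w \in S & r v < r w) ->
     [/\ p v \in S, r v < r (p v) & sd_in e [set w in S | r v <= r w] (p v) v <= d]) ->
  sdd_le e d S.
Proof.
move=> rinj S; have [k] := ubnP #|S|; elim: k S => [|k IH] S hk S0 H.
  by [].
have [x0 Hx0] := set0Pn _ S0.
case: (@arg_minnP _ x0 (fun z => z \in S) r Hx0) => v Hv Hmin.
have [/eqP c1|c1] := boolP (#|S| == 1); first by apply: sdd_single.
have Hc : 0 < #|S :\ v| by move: c1; rewrite (cardsD1 v) Hv; case: #|_|.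
have [w Hw] : exists w, w \in S :\ v by apply/set0Pn; rewrite -card_gt0.
have ltvw : forall w, w \in S :\ v -> r v < r w.
  move=> z; rewrite !inE => /andP [zv zS]; rewrite ltn_neqAle Hmin // andbT.
  by apply: contra zv => /eqP/rinj ->.
have [Hp Hlt Hsd] := H v Hv (ex_intro2 _ _ w (subsetP (subD1set S v) _ Hw) (ltvw _ Hw)).
have ES : [set w in S | r v <= r w] = S.
  by apply/setP => z; rewrite inE; case: (boolP (z \in S)) => //= /Hmin.
rewrite ES in Hsd.
apply: (@sdd_step _ _ _ S (p v) v Hp Hv) => //.
  by apply: contraTneq Hlt => ->; rewrite ltnn.
apply: IH.
- by move: hk; rewrite (cardsD1 v S) Hv.
- by apply/set0Pn; exists w.
move=> v' Hv' [w' Hw' lt'].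
have Hv'S : v' \in S by move: Hv'; rewrite inE => /andP [].
have [Hp' Hlt' Hsd'] := H v' Hv'S (ex_intro2 _ _ w' (subsetP (subD1set S v) _ Hw') lt').
have lvv' := ltvw _ Hv'.
split => //.
  rewrite !inE Hp' andbT; apply: contraTneq Hlt' => ->; lia.
have -> : [set w in S :\ v | r v' <= r w] = [set w in S | r v' <= r w] => //.
apply/setP => z; rewrite !inE; case: (boolP (r v' <= r z)); rewrite ?andbF ?andbT //.
move=> hz; case: (boolP (z == v)) => //= /eqP E; subst z; lia.
Qed.

Lemma sdd_inj (U T : finType) (g : U -> T) (e : rel T) d (A : {set U}) :
  injective g -> sdd_le e d (g @: A) -> sdd_le (fun x y => e (g x) (g y)) d A.
Proof.
move=> ginj H; move EX: (g @: A) H => X H; elim: H A EX => [S HS|S u v Hu Hv Huv Hsd Hrec IH] A EX.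
  by apply: sdd_single; rewrite -(card_imset _ ginj) EX.
subst S.
case/imsetP: Hu => u' Hu' Eu; case/imsetP: Hv => v' Hv' Ev; subst u v.
apply: (@sdd_step _ _ _ A u' v') => //.
- by rewrite (inj_eq ginj) in Huv.
- move: Hsd; rewrite /sd_in /= -[X in _ -> X <= _](card_imset _ ginj).
  move=> h; apply: leq_trans h; apply/eq_leq; apply: eq_card => y.
  case: (boolP (y \in g @: A)) => [/imsetP [y' Hy' ->]|Hy].
    by rewrite mem_imset // /nbhd_in !inE !mem_imset // !(inj_eq ginj).
  rewrite [in RHS]inE /nbhd_in !inE (negbTE Hy) /= !andbF /=.
  apply/negP => /imsetP [y' Hy' Ey]; subst y; apply/negP: Hy; rewrite negbK mem_imset //.
  by move: Hy'; rewrite !inE => /orP [] /andP [_ /andP [_ /andP []]].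
- apply: IH; apply/setP => y; rewrite !inE.
  case: (boolP (y \in g @: A)) => [/imsetP [y' Hy' ->]|Hy].
    by rewrite !mem_imset // !inE (inj_eq ginj) Hy'.
  rewrite andbF; apply/negbTE/negP => /imsetP [y' Hy' Ey]; subst y; apply/negP: Hy; rewrite negbK mem_imset //.
  by move: Hy'; rewrite inE => /andP [].
Qed.

Section C.
Variable n : nat.
Definition T := ('I_n.+1 * 'I_n.+1)%type.
Definition key (x : T) : nat := x.1 * n.+1 + x.2.
Definition part (x : T) : T :=
  if x.2 < n then (x.1, inord x.2.+1) else (inord x.1.+1, x.2).
Definition adj (e : rel 'I_n.+1) (x y : T) : bool :=
 [|| [&& x.1 == x.2, y.1 == y.2 & e x.1 y.1],
     [&& x.1 == x.2, y.1 < y.2, e y.1 x.1 & y.2 <= x.1] |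
     [&& y.1 == y.2, x.1 < x.2, e x.1 y.1 & x.2 <= y.1]].

Lemma key_le (x y : T) : (key x <= key y) = (x.1 < y.1) || ((x.1 == y.1 :> nat) && (x.2 <= y.2)).
Proof.
case: x => [[a Ha] [b Hb]]; case: y => [[c Hc] [d Hd]]; rewrite /key /=; nia.
Qed.

Lemma key_inj : injective key.
Proof.
move=> [[a Ha] [b Hb]] [[c Hc] [d Hd]]; rewrite /key /= => E.
have E1 : a = c by nia.
have E2 : b = d by nia.
subst; congr (_, _); exact: val_inj.
Qed.

Lemma adj_same e (v w : T) : v.1 <= v.2 -> (v.2 < n) || (v.1 < n) ->
  w.1 <= w.2 -> key v <= key w -> w != part v -> w != v -> w != (v.2, v.2) ->
  adj e (part v) w = adj e v w.
Proof.
case: v => i j; case: w => c d; rewrite key_le /part /adj /= !xpair_eqE.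
case: (ltnP j n) => hj /=.
  rewrite -!val_eqE /= !inordK; last by lia.
  move=> ? ? ? ? _ ? ?; case: (e i c); case: (e c i); lia.
rewrite -!val_eqE /= => h1 h2; rewrite !inordK; last by lia.
move=> h3 h4; rewrite xpair_eqE -!val_eqE /= !inordK; last by lia.
move=> h5 h6 h7; move: (ltn_ord c) (ltn_ord d) (ltn_ord i) (ltn_ord j) => *.
case: (e i c); case: (e c i); case: (e (inord i.+1) c); case: (e c (inord i.+1)); lia.
Qed.

Lemma adj_irr e : irreflexive e -> irreflexive (adj e).
Proof. move=> ei x; rewrite /adj ei /=; lia. Qed.

Lemma adj_sym e : symmetric e -> symmetric (adj e).
Proof.
move=> es x y; rewrite /adj (es x.1 y.1) (eq_sym x.1) (eq_sym y.1).
case: (e y.1 x.1) (e x.1 y.1); lia.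
Qed.

Lemma sd_part e v : irreflexive e ->
  v \in [set x : T | x.1 <= x.2] -> (v.2 < n) || (v.1 < n) ->
  sd_in (adj e) [set w in [set x : T | x.1 <= x.2] | key v <= key w] (part v) v <= 1.
Proof.
move=> ei; rewrite inE => vS hv; rewrite /sd_in.
apply: (leq_trans (subset_leq_card (B:=[set (v.2,v.2)]) _)); last by rewrite cards1.
apply/subsetP => w; rewrite /nbhd_in !inE.
case: (eqVneq w (v.2, v.2)) => // hw.
case: (eqVneq w v) => [->|hv']; first by rewrite adj_irr // !andbF.
case: (eqVneq w (part v)) => [->|hp]; first by rewrite adj_irr // !andbF.
case: (boolP (w.1 <= w.2)) => hS; last by rewrite !andbF.
case: (boolP (key v <= key w)) => hk; last by rewrite !andbF.
by rewrite (adj_same e vS hv hS hk hp hv' hw) /=; case: (adj e v w).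
Qed.
End C.

Theorem proposition1p1 (n : nat) (e : rel 'I_n) :
  2 <= n -> simple_graph e ->
  exists (m : nat) (e' : rel 'I_m) (f : 'I_n -> 'I_m),
    [/\ m < n ^ 2, simple_graph e', injective f,
        (forall x y, e' (f x) (f y) = e x y)
      & sdd_le e' 1 [set: 'I_m]].
Proof.
case: n e => [|[|n']] e // _ [es ei].
pose S := [set x : T n'.+1 | x.1 <= x.2].
have diag : forall i, (i, i) \in S by move=> i; rewrite inE.
exists #|S|, (fun x y => adj e (enum_val x) (enum_val y)),
  (fun i => enum_rank_in (diag i) (i, i)).
split.
- have : S \proper setT.
    rewrite properT; apply/eqP => E.
    have := in_setT (inord 1 : 'I_n'.+2, ord0 : 'I_n'.+2).
    by rewrite -E inE /= inordK.
  move/proper_card; rewrite cardsT card_prod card_ord -mulnn.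
  done.
- split; first by move=> x y; apply: adj_sym.
  by move=> x; apply: adj_irr.
- move=> i j /(congr1 enum_val); rewrite !enum_rankK_in ?diag //.
  by case.
- move=> x y; rewrite !enum_rankK_in ?diag // /adj /= !eqxx ltnn /=.
  by case: (e x y); rewrite ?andbF.
- apply: (sdd_inj (g := enum_val)); first exact: enum_val_inj.
  have -> : enum_val @: [set: 'I_#|S|] = S.
    apply/setP => x; apply/imsetP/idP => [[i _ ->]|Hx]; first exact: enum_valP.
    by exists (enum_rank_in Hx x); rewrite ?enum_rankK_in.
  apply: (@sdd_by_key _ _ _ (@key n'.+1) (@part n'.+1)); first exact: key_inj.
    by apply/set0Pn; exists (ord0, ord0).
  move=> v vS [w wS ltvw].
  have hv : (v.2 < n'.+1) || (v.1 < n'.+1).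
    move: vS wS ltvw; case: v => [[a Ha] [b Hb]]; case: w => [[c Hc] [d Hd]].
    rewrite !inE ltnNge key_le /=; lia.
  split.
  + clear ltvw wS; move: vS hv; case: v => [[a Ha] [b Hb]]; rewrite !inE /part /=.
    case: ifP => h /= ? ?; rewrite !inordK /=; lia.
  + clear ltvw wS; rewrite ltnNge key_le; move: vS hv; case: v => [[a Ha] [b Hb]]; rewrite inE /part /=.
    case: ifP => h /= ? ?; rewrite !inordK /=; lia.
  + exact: sd_part.
Qed.
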